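(* Let $\alpha,\beta,\gamma\in\Bbbk^n$ and $\mathcal H=\mathcal H(\alpha,\beta,\gamma)$. A $\Bbbk$-basis of $\mathcal H$ is given by the (images of the) paths \[(u_iu_{i+1}\cdots u_{i+k-1})\,(d_{i+k-1}u_{i+k-1})^j\,(d_{i+k-1}d_{i+k-2}\cdots d_{i+k-\ell}),\qquad i\in Q_0,\ j,k,\ell\ge 0,\] where the block of $u$'s is empty if $k=0$, the block of $d$'s is empty if $\ell=0$, and for $j=k=\ell=0$ the path is the trivial path $e_i$ (indices mod $n$; in particular $k,\ell$ may exceed $n$, so arrows repeat).
   Context: $\Bbbk$ is an algebraically closed field of characteristic zero. Fix $n\ge1$; indices are taken modulo $n$ and $Q_0=\{0,\dots,n-1\}$. Let $Q$ be the quiver with vertex set $Q_0$ and arrows $u_i:i\to i+1$ and $d_i:i+1\to i$ for each $i\in Q_0$ (for $n=1$ these are two loops). Paths are written left to right: in a path $a_1a_2\cdots a_m$ the target of $a_j$ is the source of $a_{j+1}$; multiplication in the path algebra $\Bbbk Q$ is concatenation (zero if the paths do not compose), and $e_i$ is the trivial path at $i$, so $e_iu_i=u_i=u_ie_{i+1}$ and $e_{i+1}d_i=d_i=d_ie_i$. For $\alpha,\beta,\gamma\in\Bbbk^n$ the quiver down-up algebra $\mathcal H(\alpha,\beta,\gamma)$ is $\Bbbk Q$ modulo the relations $d_{i-1}u_{i-1}u_i=\alpha_iu_id_iu_i+\beta_iu_iu_{i+1}d_{i+1}+\gamma_iu_i$ and $d_id_{i-1}u_{i-1}=\alpha_id_iu_id_i+\beta_iu_{i+1}d_{i+1}d_i+\gamma_id_i$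 for all $i\in Q_0$. *)

(* Defs.v *)
From HB Require Import structures.
From mathcomp Require Import all_boot all_order all_algebra.
Set Implicit Arguments. Unset Strict Implicit. Unset Printing Implicit Defensive.
Import Order.TTheory GRing.Theory Num.Theory.

(* Quiver Q with vertices 0..n-1 (represented as nats < n, indices mod n).
   An arrow is a pair (b, i) with i < n: (true, i) = u_i : i -> i+1,
   (false, i) = d_i : i+1 -> i. *)
Definition arrow := (bool * nat)%type.

Definition asrc (n : nat) (a : arrow) : nat :=
  if a.1 then a.2 else (a.2 + 1) %% n.
Definition atgt (n : nat) (a : arrow) : nat :=
  if a.1 then (a.2 + 1) %% n else a.2.

(* A path: start vertex together with the list of arrows, read left to right
   (target of each arrow = source of the next). *)
Definition qpath := (nat * seq arrow)%type.

Fixpoint chain (n : nat) (v : nat) (s : seq arrow) : bool :=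
  match s with
  | [::] => true
  | a :: s' => (a.2 < n) && (asrc n a == v) && chain n (atgt n a) s'
  end.

Definition valid_path (n : nat) (p : qpath) : bool := (p.1 < n) && chain n p.1 p.2.

Definition ptgt (n : nat) (p : qpath) : nat := last p.1 (map (atgt n) p.2).

(* concatenation of paths (None = zero when they do not compose) *)
Definition pmul (n : nat) (p q : qpath) : option qpath :=
  if ptgt n p == q.1 then Some (p.1, p.2 ++ q.2) else None.

(* elements of the path algebra k Q, given as finite formal linear combinations *)
Definition lc (F : Type) := seq (F * qpath).

Definition coef (F : nzRingType) (f : lc F) (w : qpath) : F :=
  (\sum_(x <- f | x.2 == w) x.1)%R.

Definition sandwich (F : nzRingType) (n : nat) (p : qpath) (r : lc F) (q : qpath)
  : lc F :=
  pmap (fun x : F * qpath =>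
          match pmul n p x.2 with
          | Some pw => match pmul n pw q with
                       | Some pwq => Some (x.1, pwq)
                       | None => None end
          | None => None end) r.

Definition vprev (n i : nat) : nat := (i + n - 1) %% n.
Definition vnext (n i : nat) : nat := (i + 1) %% n.

(* The defining relations at vertex i (i < n):
   rel1: d_{i-1}u_{i-1}u_i - a_i u_i d_i u_i - b_i u_i u_{i+1} d_{i+1} - c_i u_i
   rel2: d_i d_{i-1} u_{i-1} - a_i d_i u_i d_i - b_i u_{i+1} d_{i+1} d_i - c_i d_i *)
Definition relation (F : nzRingType) (n : nat) (al be ga : n.-tuple F)
  (r : bool * nat) : lc F :=
  let i := r.2 in
  let a := nth 0%R al i in let b := nth 0%R be i in let c := nth 0%R ga i in
  if r.1 then
    [:: (1%R, (i, [:: (false, vprev n i); (true, vprev n i); (true, i)]));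
        ((- a)%R, (i, [:: (true, i); (false, i); (true, i)]));
        ((- b)%R, (i, [:: (true, i); (true, vnext n i); (false, vnext n i)]));
        ((- c)%R, (i, [:: (true, i)]))]
  else
    [:: (1%R, (vnext n i, [:: (false, i); (false, vprev n i); (true, vprev n i)]));
        ((- a)%R, (vnext n i, [:: (false, i); (true, i); (false, i)]));
        ((- b)%R, (vnext n i, [:: (true, vnext n i); (false, vnext n i); (false, i)]));
        ((- c)%R, (vnext n i, [:: (false, i)]))].

(* f : paths -> F (coefficient function of an element of kQ) lies in the
   two-sided ideal generated by the relations: it is a finite sum
   sum c * p * rel * q with p, q paths of Q. *)
Definition in_ideal (F : nzRingType) (n : nat) (al be ga : n.-tuple F)
  (f : qpath -> F) : Prop :=
  exists L : seq (F * qpath * (bool * nat) * qpath),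
    (forall x, x \in L ->
       [/\ valid_path n x.1.1.2, valid_path n x.2 & x.1.2.2 < n]) /\
    forall w, f w =
      coef (flatten [seq [seq ((x.1.1.1 * y.1)%R, y.2) | y <- sandwich n x.1.1.2
                             (relation al be ga x.1.2) x.2] | x <- L]) w.

(* the path (u_i ... u_{i+k-1}) (d_{i+k-1} u_{i+k-1})^j (d_{i+k-1} ... d_{i+k-l}) *)
Definition bpath (n i j k l : nat) : qpath :=
  (i, [seq (true, (i + m) %% n) | m <- iota 0 k]
      ++ flatten (nseq j [:: (false, (i + k + n - 1) %% n); (true, (i + k + n - 1) %% n)])
      ++ [seq (false, (i + k + n * m.+1 - m.+1) %% n) | m <- iota 0 l]).

Definition bcomb (F : nzRingType) (n : nat) (L : seq (F * (nat * nat * nat * nat))) : lc F :=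
  [seq (x.1, bpath n x.2.1.1.1 x.2.1.1.2 x.2.1.2 x.2.2) | x <- L].

(* Main.v *)
Require Import Defs.
From HB Require Import structures.
From mathcomp Require Import all_boot all_order all_algebra.
From mathcomp Require Import ring zify.
Import Order.TTheory GRing.Theory Num.Theory.
Set Implicit Arguments. Unset Strict Implicit. Unset Printing Implicit Defensive.

Section Vert.
Variable n : nat.
Hypothesis hn : (0 < n)%N.

Lemma vnext_lt v : (vnext n v < n)%N. Proof. by rewrite /vnext ltn_pmod. Qed.
Lemma vprev_lt v : (vprev n v < n)%N. Proof. by rewrite /vprev ltn_pmod. Qed.

Lemma vnext_vprev v : (v < n)%N -> vnext n (vprev n v) = v.
Proof.
move=> hv; rewrite /vnext /vprev modnDml.
have -> : (v + n - 1 + 1 = v + n)%N by lia.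
by rewrite modnDr modn_small.
Qed.

Lemma vprev_vnext v : (v < n)%N -> vprev n (vnext n v) = v.
Proof.
move=> hv; rewrite /vnext /vprev.
have -> : ((v + 1) %% n + n - 1 = (v + 1) %% n + (n - 1))%N by lia.
rewrite modnDml.
have -> : (v + 1 + (n - 1) = v + n)%N by lia.
by rewrite modnDr modn_small.
Qed.

Definition vstep (v : nat) (b : bool) := if b then vnext n v else vprev n v.
Definition vert (s : nat) (w : seq bool) := foldl vstep s w.

Lemma vert_cat s A B : vert s (A ++ B) = vert (vert s A) B.
Proof. by rewrite /vert foldl_cat. Qed.

Lemma vert_lt s w : (s < n)%N -> (vert s w < n)%N.
Proof.
elim: w s => [|b w IH] s hs //=; apply: IH.
by case: b; rewrite /vstep ?vnext_lt ?vprev_lt.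
Qed.

Fixpoint arr (v : nat) (w : seq bool) : seq arrow :=
  match w with
  | [::] => [::]
  | b :: w' => if b then (true, v) :: arr (vnext n v) w'
               else (false, vprev n v) :: arr (vprev n v) w'
  end.

Definition tp (s : nat) (w : seq bool) : qpath := (s, arr s w).

Lemma arr_cat v A B : arr v (A ++ B) = arr v A ++ arr (vert v A) B.
Proof. by elim: A v => [|b A IH] v //=; case: b; rewrite IH. Qed.

Lemma map_fst_arr v w : map fst (arr v w) = w.
Proof. by elim: w v => [|b w IH] v //=; case: b => /=; rewrite IH. Qed.

Lemma ptgt_tp s w : ptgt n (tp s w) = vert s w.
Proof.
rewrite /ptgt /tp /=; elim: w s => [|b w IH] s //=.
by case: b => /=; [exact: (IH (vnext n s)) | exact: (IH (vprev n s))].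
Qed.

Lemma chain_arr v w : (v < n)%N -> chain n v (arr v w).
Proof.
elim: w v => [|b w IH] v hv //=; case: b => /=.
  by rewrite hv eqxx /= IH // vnext_lt.
rewrite vprev_lt /asrc /= -/(vnext n (vprev n v)) vnext_vprev // eqxx /=.
by rewrite IH // vprev_lt.
Qed.

Lemma valid_tp s w : (s < n)%N -> valid_path n (tp s w).
Proof. by move=> hs; rewrite /valid_path /= hs chain_arr. Qed.

Lemma tp_valid p : valid_path n p -> p = tp p.1 (map fst p.2).
Proof.
case: p => s l /andP [/= _ hc]; rewrite /tp /=; congr (_, _).
elim: l s hc => [|[b i] l IH] s //= /andP [/andP [hi /eqP hs] hc].
rewrite /asrc /= in hs; case: b hs hc => /= hs hc.
  by subst i; rewrite -IH.
have ei : i = vprev n s by rewrite -hs -/(vnext n i) vprev_vnext.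
by subst i; rewrite -IH.
Qed.

Lemma tp_inj s w s' w' : tp s w = tp s' w' -> s = s' /\ w = w'.
Proof.
case=> es h; subst s'; split=> //.
by rewrite -(map_fst_arr s w) h map_fst_arr.
Qed.

End Vert.

Definition lhs (k : bool) := [:: false; k; true].
Definition r1 (k : bool) := if k then [:: true; false; true] else [:: false; true; false].
Definition r2 (k : bool) := if k then [:: true; true; false] else [:: true; false; false].
Definition r3 (k : bool) := [:: k].

Fixpoint find (w : seq bool) : option (seq bool * bool * seq bool) :=
  match w with
  | false :: k :: true :: B => Some ([::], k, B)
  | b :: w' => omap (fun t => (b :: t.1.1, t.1.2, t.2)) (find w')
  | [::] => None
  end.

Lemma find_cons b w : find (b :: w) =
  if [&& b == false, (1 < size w)%N & nth false w 1] then Some ([::], nth false w 0, drop 2 w)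
  else omap (fun t => (b :: t.1.1, t.1.2, t.2)) (find w).
Proof. by case: b; case: w => [|x [|y w]] //=; try case: y => //=; rewrite drop0. Qed.

Lemma find_some w A k B : find w = Some (A, k, B) -> w = A ++ lhs k ++ B.
Proof.
elim: w A => [|b w IH] A //; rewrite find_cons.
case: ifP => [/and3P [/eqP -> h1 h2] [<- <- <-]|_].
  by clear IH; case: w h1 h2 => [|x [|y w]] //= _ ->; rewrite drop0.
case E: (find w) => [[[A' k'] B']|] //= [<- ek eB]; subst k' B'.
by rewrite (IH _ E).
Qed.

Lemma find_min w A k B A' k' B' :
  find w = Some (A, k, B) -> w = A' ++ lhs k' ++ B' -> (size A <= size A')%N.
Proof.
elim: w A A' k B => [|b w IH] A A' k B; first by case: A'.
rewrite find_cons; case: ifP => [_ [<- _ _]|hc] //.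
case E: (find w) => [[[A0 k0] B0]|] //= [<- _ _].
case: A' => [|b' A'] /=.
  by move=> [eb ew]; move: hc; rewrite eb ew /=.
by case=> _ ew; rewrite ltnS (IH _ _ _ _ E ew).
Qed.

Lemma find_none w : find w = None -> forall A k B, w <> A ++ lhs k ++ B.
Proof.
elim: w => [|b w IH] hf A k B; first by case: A.
move: hf; rewrite find_cons; case: ifP => [_ //|hc].
case E: (find w) => [x|] //= _.
case: A => [|b' A] /=.
  by move=> [eb ew]; move: hc; rewrite eb ew.
by case=> _ ew; apply: (IH E A k B).
Qed.

Definition mstep (a : nat) (b : bool) := (a.*2 + ~~ b)%N.
Definition meas (w : seq bool) := foldl mstep 1%N w.

Lemma foldl_mono a a' B : (a < a')%N -> (foldl mstep a B < foldl mstep a' B)%N.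
Proof.
elim: B a a' => [|b B IH] a a' h //=; apply: IH.
rewrite /mstep; case: (~~ b); rewrite -!muln2; lia.
Qed.

Lemma meas_cat3 A X B : meas (A ++ X ++ B) = foldl mstep (foldl mstep (meas A) X) B.
Proof. by rewrite /meas !foldl_cat. Qed.

Lemma meas_r1 A k B : (meas (A ++ r1 k ++ B) < meas (A ++ lhs k ++ B))%N.
Proof.
rewrite !meas_cat3; apply: foldl_mono; case: k => /=; rewrite /mstep /= -!muln2; lia.
Qed.
Lemma meas_r2 A k B : (meas (A ++ r2 k ++ B) < meas (A ++ lhs k ++ B))%N.
Proof.
rewrite !meas_cat3; apply: foldl_mono; case: k => /=; rewrite /mstep /= -!muln2; lia.
Qed.
Lemma meas_r3 A k B : (meas (A ++ r3 k ++ B) < meas (A ++ lhs k ++ B))%N.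
Proof.
rewrite !meas_cat3; apply: foldl_mono; case: k => /=; rewrite /mstep /= -!muln2; lia.
Qed.

Section Alg.
Variable F : comNzRingType.
Variable n : nat.
Hypothesis hn : (0 < n)%N.
Variables al be ga : n.-tuple F.
Local Open Scope ring_scope.

Definition lcw := seq (F * seq bool).
Definition scl (c : F) (l : lcw) : lcw := [seq (c * x.1, x.2) | x <- l].
Definition linmap (f : seq bool -> lcw) (l : lcw) : lcw :=
  flatten [seq scl x.1 (f x.2) | x <- l].
Definition par k v := if k then v else vprev n v.
Definition ca k v := nth 0 al (par k v).
Definition cb k v := nth 0 be (par k v).
Definition cc k v := nth 0 ga (par k v).
Definition step k v (A B : seq bool) : lcw :=
  [:: (ca k v, A ++ r1 k ++ B); (cb k v, A ++ r2 k ++ B); (cc k v, A ++ r3 k ++ B)].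

Fixpoint Nf (fuel s : nat) (w : seq bool) : lcw :=
  match fuel with
  | 0 => [::]
  | f.+1 => match find w with
            | None => [:: (1, w)]
            | Some (A, k, B) => linmap (Nf f s) (step k (vert n s A) A B)
            end
  end.

Lemma Nf_stable f s w : (meas w < f)%N -> forall g, (f <= g)%N -> Nf f s w = Nf g s w.
Proof.
elim: f w => [|f IH] w // hw [|g] // hg /=.
case E: (find w) => [[[A k] B]|] //.
have ew := find_some E.
have h1 := meas_r1 A k B; have h2 := meas_r2 A k B; have h3 := meas_r3 A k B.
rewrite -ew in h1 h2 h3.
rewrite /linmap /step /= (IH (A ++ r1 k ++ B) _ g) ?(IH (A ++ r2 k ++ B) _ g)
  ?(IH (A ++ r3 k ++ B) _ g) //; lia.
Qed.

Definition N s w := Nf (meas w).+1 s w.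

Lemma Nf_N f s x : (meas x < f)%N -> Nf f s x = N s x.
Proof. by move=> h; rewrite /N (@Nf_stable (meas x).+1 s x _ f). Qed.

Lemma N_none s w : find w = None -> N s w = [:: (1, w)].
Proof. by rewrite /N /= => ->. Qed.

Lemma N_some s w A k B : find w = Some (A, k, B) ->
  N s w = linmap (N s) (step k (vert n s A) A B).
Proof.
move=> E; rewrite /N /= E.
have ew := find_some E.
have h1 := meas_r1 A k B; have h2 := meas_r2 A k B; have h3 := meas_r3 A k B.
rewrite -ew in h1 h2 h3.
by rewrite /linmap /step /= !Nf_N.
Qed.

Definition sumw (l : lcw) (g : seq bool -> F) := \sum_(x <- l) x.1 * g x.2.

Lemma sumw_cat l1 l2 g : sumw (l1 ++ l2) g = sumw l1 g + sumw l2 g.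
Proof. by rewrite /sumw big_cat. Qed.

Lemma sumw_scl c l g : sumw (scl c l) g = c * sumw l g.
Proof.
rewrite /sumw /scl big_map mulr_sumr; apply: eq_bigr => x _ /=; by rewrite mulrA.
Qed.

Lemma sumw_linmap f l g : sumw (linmap f l) g = \sum_(x <- l) x.1 * sumw (f x.2) g.
Proof.
elim: l => [|x l IH]; first by rewrite /sumw /linmap /= !big_nil.
by rewrite /linmap /= sumw_cat -/(linmap f l) IH big_cons sumw_scl.
Qed.

Lemma sumw_step f k v A B g : sumw (linmap f (step k v A B)) g =
  ca k v * sumw (f (A ++ r1 k ++ B)) g + cb k v * sumw (f (A ++ r2 k ++ B)) g
  + cc k v * sumw (f (A ++ r3 k ++ B)) g.
Proof. by rewrite sumw_linmap /step !big_cons big_nil /= addr0 addrA. Qed.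

Lemma sumw_N_none s w g : find w = None -> sumw (N s w) g = g w.
Proof. by move=> E; rewrite N_none // /sumw big_cons big_nil mul1r addr0. Qed.

Lemma sumw_N_some s w A k B g : find w = Some (A, k, B) ->
  sumw (N s w) g = ca k (vert n s A) * sumw (N s (A ++ r1 k ++ B)) g
    + cb k (vert n s A) * sumw (N s (A ++ r2 k ++ B)) g
    + cc k (vert n s A) * sumw (N s (A ++ r3 k ++ B)) g.
Proof. by move=> E; rewrite (N_some _ E) sumw_step. Qed.


Lemma prefix_split (A0 A Y Z : seq bool) : A0 ++ Y = A ++ Z -> (size A0 <= size A)%N ->
  exists X, A = A0 ++ X /\ Y = X ++ Z.
Proof.
elim: A0 A => [|a A0 IH] A /=; first by move=> ->; exists A.
case: A => [|b A] //= [-> e] h.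
by have [X [-> ->]] := IH A e h; exists X.
Qed.

Lemma vert_r1 k v : (v < n)%N -> vert n v (r1 k) = vert n v (lhs k).
Proof.
move=> hv; case: k; rewrite /vert /= /vstep ?vnext_vprev ?vprev_vnext //
  ?vnext_lt ?vprev_lt //.
Qed.
Lemma vert_r2 k v : (v < n)%N -> vert n v (r2 k) = vert n v (lhs k).
Proof.
move=> hv; case: k; rewrite /vert /= /vstep ?vnext_vprev ?vprev_vnext //
  ?vnext_lt ?vprev_lt //.
Qed.
Lemma vert_r3 k v : (v < n)%N -> vert n v (r3 k) = vert n v (lhs k).
Proof.
move=> hv; case: k; rewrite /vert /= /vstep ?vnext_vprev ?vprev_vnext //
  ?vnext_lt ?vprev_lt //.
Qed.

Lemma N_rel m s A k B g : (s < n)%N -> (meas (A ++ lhs k ++ B) < m)%N ->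
  sumw (N s (A ++ lhs k ++ B)) g =
    ca k (vert n s A) * sumw (N s (A ++ r1 k ++ B)) g
    + cb k (vert n s A) * sumw (N s (A ++ r2 k ++ B)) g
    + cc k (vert n s A) * sumw (N s (A ++ r3 k ++ B)) g.
Proof.
move=> hs; elim: m A k B => [|m IH] A k B hm //.
case E: (find (A ++ lhs k ++ B)) => [[[A0 k0] B0]|]; last first.
  by exfalso; exact: (find_none E (erefl _)).
have ew := find_some E.
have hmin := find_min E (erefl _).
rewrite (sumw_N_some _ _ E).
have [X [eA eX]] := prefix_split (esym ew) hmin.
subst A.
have hv0 : (vert n s A0 < n)%N by apply: vert_lt.
clear hmin; case: X eX ew E hm => [|x1 [|x2 [|x3 M]]] /=.
- by case=> -> ->; rewrite cats0.
- case=> <- e1 e2 ->; subst k0 k => _ _ hm.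
  have hm2 := meas_r2 A0 false (true :: B).
  have e3 : A0 ++ r2 false ++ true :: B = (A0 ++ [:: true]) ++ lhs false ++ B.
    by rewrite -!catA.
  rewrite e3 IH; last by rewrite -e3; apply: leq_trans hm2 _; rewrite -ltnS; move: hm; rewrite -!catA.
  have hm2' := meas_r2 (A0 ++ [:: false]) true B.
  have e4 : (A0 ++ [:: false]) ++ r2 true ++ B = A0 ++ lhs true ++ false :: B.
    by rewrite -!catA.
  rewrite e4 IH; last by rewrite -e4; apply: leq_trans hm2' _; rewrite -ltnS.
  rewrite !vert_cat /= /vstep.
  rewrite /ca /cb /cc /par vprev_vnext // -!catA /=.
  ring.
- by case.
- case=> <- <- <- -> => ew E hm.
  have hw : (meas (A0 ++ lhs k0 ++ M ++ lhs k ++ B) <= m)%N by rewrite -ltnS; move: hm; rewrite -!catA.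
  have m1 := meas_r1 A0 k0 (M ++ lhs k ++ B).
  have m2 := meas_r2 A0 k0 (M ++ lhs k ++ B).
  have m3 := meas_r3 A0 k0 (M ++ lhs k ++ B).
  have n1 := meas_r1 (A0 ++ lhs k0 ++ M) k B.
  have n2 := meas_r2 (A0 ++ lhs k0 ++ M) k B.
  have n3 := meas_r3 (A0 ++ lhs k0 ++ M) k B.
  rewrite -!catA in n1 n2 n3.
  have e1 : A0 ++ r1 k0 ++ M ++ lhs k ++ B = (A0 ++ r1 k0 ++ M) ++ lhs k ++ B by rewrite !catA.
  have e2 : A0 ++ r2 k0 ++ M ++ lhs k ++ B = (A0 ++ r2 k0 ++ M) ++ lhs k ++ B by rewrite !catA.
  have e3 : A0 ++ r3 k0 ++ M ++ lhs k ++ B = (A0 ++ r3 k0 ++ M) ++ lhs k ++ B by rewrite !catA.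
  rewrite e1 IH; last by rewrite -e1; apply: leq_trans m1 hw.
  rewrite e2 IH; last by rewrite -e2; apply: leq_trans m2 hw.
  rewrite e3 IH; last by rewrite -e3; apply: leq_trans m3 hw.
  rewrite -!catA.
  rewrite (IH A0 k0 (M ++ r1 k ++ B)); last by apply: leq_trans n1 hw.
  rewrite (IH A0 k0 (M ++ r2 k ++ B)); last by apply: leq_trans n2 hw.
  rewrite (IH A0 k0 (M ++ r3 k ++ B)); last by apply: leq_trans n3 hw.
  rewrite !vert_cat vert_r1 // vert_r2 // vert_r3 //.
  have ev : vert n (vert n s A0) [:: false, k0, true & M] =
    vert n (vert n (vert n s A0) (lhs k0)) M by [].
  rewrite ev; ring.
Qed.


Definition enc k j l := nseq k true ++ flatten (nseq j [:: false; true]) ++ nseq l false.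

Lemma find_true w : find (true :: w) = omap (fun t => (true :: t.1.1, t.1.2, t.2)) (find w).
Proof. by rewrite find_cons. Qed.

Lemma find_nseqf l : find (nseq l false) = None.
Proof.
elim: l => [|l IH] //; change (find (false :: nseq l false) = None); rewrite find_cons.
by case: l IH => [|[|l]] //= ->.
Qed.

Lemma find_J j l : find (flatten (nseq j [:: false; true]) ++ nseq l false) = None.
Proof.
elim: j => [|j IH]; first exact: find_nseqf.
change (find (false :: true :: (flatten (nseq j [:: false; true]) ++ nseq l false)) = None).
rewrite find_cons /=.
have -> : nth false (flatten (nseq j [:: false; true]) ++ nseq l false) 0 = false.
  by case: j {IH} => [|j] //=; case: l.
by rewrite andbF IH.
Qed.

Lemma find_enc k j l : find (enc k j l) = None.
Proof.
elim: k => [|k IH]; first exact: find_J.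
by change (find (true :: enc k j l) = None); rewrite find_true IH.
Qed.

Lemma find_cons_none b w : find (b :: w) = None -> find w = None.
Proof. by rewrite find_cons; case: ifP => // _; case: (find w). Qed.

Lemma normal_enc w : find w = None -> exists k j l, w = enc k j l.
Proof.
elim: w => [|b w IH] hf; first by exists 0%N, 0%N, 0%N.
have [k [j [l ew]]] := IH (find_cons_none hf).
case: b hf => hf; first by exists k.+1, j, l; rewrite ew.
case: k ew => [|[|k]] ew.
- case: j ew => [|j] ew; first by exists 0%N, 0%N, l.+1; rewrite ew.
  by move: hf; rewrite ew.
- by exists 0%N, j.+1, l; rewrite ew.
- by move: hf; rewrite ew.
Qed.

Lemma arr_u x k : arr n (x %% n) (nseq k true) = [seq (true, ((x + m) %% n)%N) | m <- iota 0 k].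
Proof.
elim: k x => [|k IH] x //=.
rewrite addn0 /vnext modnDml IH; congr (_ :: _).
have -> : iota 1 k = map (addn 1) (iota 0 k) by rewrite -iotaDl.
rewrite -map_comp; apply: eq_map => m /=.
by rewrite addnA.
Qed.

Lemma vert_u x k : vert n (x %% n) (nseq k true) = ((x + k) %% n)%N.
Proof.
elim: k x => [|k IH] x /=; first by rewrite addn0.
by rewrite /vnext modnDml IH -addnA add1n.
Qed.

Lemma arr_J v j : (v < n)%N ->
  arr n v (flatten (nseq j [:: false; true])) =
  flatten (nseq j [:: (false, vprev n v); (true, vprev n v)]).
Proof.
move=> hv; elim: j => [|j IH] //=.
by rewrite vnext_vprev // IH.
Qed.

Lemma vert_J v j : (v < n)%N -> vert n v (flatten (nseq j [:: false; true])) = v.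
Proof.
move=> hv; elim: j => [|j IH] //=.
by rewrite /vert /= /vstep vnext_vprev // -/(vert n v _) IH.
Qed.

Lemma vprev_mod x : vprev n (x %% n) = ((x + n - 1) %% n)%N.
Proof.
rewrite /vprev.
have -> : (x %% n + n - 1 = x %% n + (n - 1))%N by lia.
rewrite modnDml; have -> : (x + (n - 1) = x + n - 1)%N by lia.
by [].
Qed.

Lemma arr_D x l : arr n (x %% n) (nseq l false) =
  [seq (false, ((x + n * m.+1 - m.+1) %% n)%N) | m <- iota 0 l].
Proof.
elim: l x => [|l IH] x //=.
rewrite vprev_mod IH muln1; congr (_ :: _).
have -> : iota 1 l = map (addn 1) (iota 0 l) by rewrite -iotaDl.
rewrite -map_comp; apply: eq_map => m /=.
rewrite add1n.
have h1 : (m.+1 <= n * m.+1)%N by rewrite leq_pmull.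
have -> : (n * m.+2 = n * m.+1 + n)%N by rewrite mulnS addnC.
have -> : (x + n - 1 + n * m.+1 - m.+1 = x + (n * m.+1 + n) - m.+2)%N by lia.
by [].
Qed.

Lemma bpath_tp i j k l : (i < n)%N -> bpath n i j k l = tp n i (enc k j l).
Proof.
move=> hi; rewrite /bpath /tp /enc; congr (_, _).
have ei : i = (i %% n)%N by rewrite modn_small.
rewrite arr_cat [in RHS]ei arr_u vert_u arr_cat arr_J ?ltn_pmod //.
rewrite vert_J ?ltn_pmod // arr_D vprev_mod.
by [].
Qed.

Lemma relation_tp k v : (v < n)%N ->
  relation al be ga (k, par k v) =
  [:: (1, tp n v (lhs k)); (- ca k v, tp n v (r1 k)); (- cb k v, tp n v (r2 k));
      (- cc k v, tp n v (r3 k))].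
Proof.
move=> hv; rewrite /ca /cb /cc; case: k; rewrite /relation /tp /par /=.
  by rewrite vnext_vprev // vprev_vnext // vprev_vnext ?vnext_lt.
by rewrite !vnext_vprev // vprev_vnext // vprev_vnext ?vprev_lt.
Qed.

Lemma pmul_tp s A t X : pmul n (tp n s A) (tp n t X) =
  if vert n s A == t then Some (tp n s (A ++ X)) else None.
Proof.
rewrite /pmul ptgt_tp /=; case: eqP => // <-.
by rewrite /tp arr_cat.
Qed.

Lemma vert_lhs_r s A k : (s < n)%N ->
  [/\ vert n s (A ++ r1 k) = vert n s (A ++ lhs k),
      vert n s (A ++ r2 k) = vert n s (A ++ lhs k) &
      vert n s (A ++ r3 k) = vert n s (A ++ lhs k)].
Proof.
move=> hs; have h := vert_lt hn A hs.
by rewrite !vert_cat vert_r1 // vert_r2 // vert_r3.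
Qed.

Lemma sandwich_tp s A B k : (s < n)%N ->
  sandwich n (tp n s A) (relation al be ga (k, par k (vert n s A)))
    (tp n (vert n s (A ++ lhs k)) B) =
  [:: (1, tp n s (A ++ lhs k ++ B)); (- ca k (vert n s A), tp n s (A ++ r1 k ++ B));
      (- cb k (vert n s A), tp n s (A ++ r2 k ++ B));
      (- cc k (vert n s A), tp n s (A ++ r3 k ++ B))].
Proof.
move=> hs; rewrite relation_tp ?vert_lt // /sandwich /= !pmul_tp eqxx /= !pmul_tp.
have [-> -> ->] := vert_lhs_r A k hs.
by rewrite eqxx /= -!catA.
Qed.

Lemma sandwich_cases p q b i : valid_path n p -> valid_path n q -> (i < n)%N ->
  sandwich n p (relation al be ga (b, i)) q = [::] \/
  exists s A B, [/\ (s < n)%N, p = tp n s A, q = tp n (vert n s (A ++ lhs b)) B &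
                   i = par b (vert n s A)].
Proof.
move=> vp vq hi.
have hs : (p.1 < n)%N by case/andP: vp.
rewrite (tp_valid hn vp) (tp_valid hn vq).
set s := p.1; set A := map fst p.2; set t := q.1; set B := map fst q.2.
have [v [hv ei]] : exists v, (v < n)%N /\ i = par b v.
  by case: b; [exists i | exists (vnext n i); rewrite /par vprev_vnext // vnext_lt].
rewrite ei relation_tp // /sandwich /= !pmul_tp.
case: (eqVneq (vert n s A) v) => [ev|nev]; last by left.
rewrite /= !pmul_tp.
have [-> -> ->] := vert_lhs_r A b hs.
case: (eqVneq (vert n s (A ++ lhs b)) t) => [et|net]; last by left.
by right; exists s, A, B; split => //; rewrite ?et // ev.
Qed.

Lemma coefE (l : lc F) q : coef l q = \sum_(x <- l) x.1 * (x.2 == q)%:R.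
Proof.
rewrite /coef big_mkcond; apply: eq_bigr => x _.
by case: eqP; rewrite ?mulr1 ?mulr0.
Qed.

Lemma coef_cat (l1 l2 : lc F) q : coef (l1 ++ l2) q = coef l1 q + coef l2 q.
Proof. by rewrite /coef big_cat. Qed.

Lemma coef_cons (x : F * qpath) (l : lc F) q :
  coef (x :: l) q = (if x.2 == q then x.1 else 0) + coef l q.
Proof. by rewrite /coef big_cons; case: ifP; rewrite ?add0r. Qed.

Definition toQ s (l : lcw) : lc F := [seq (x.1, tp n s x.2) | x <- l].

Lemma coef_toQ s l q : coef (toQ s l) q = sumw l (fun x => (tp n s x == q)%:R).
Proof. by rewrite coefE /toQ big_map. Qed.

Lemma ideal0 : in_ideal al be ga (fun _ => 0).
Proof. by exists [::]; split => // w; rewrite /coef big_nil. Qed.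

Lemma ideal_ext f g : f =1 g -> in_ideal al be ga f -> in_ideal al be ga g.
Proof. by move=> e [L [h1 h2]]; exists L; split => // w; rewrite -e. Qed.

Lemma ideal_add f g : in_ideal al be ga f -> in_ideal al be ga g ->
  in_ideal al be ga (fun w => f w + g w).
Proof.
move=> [L1 [a1 b1]] [L2 [a2 b2]]; exists (L1 ++ L2); split.
  by move=> x; rewrite mem_cat => /orP [] h; [apply: a1 | apply: a2].
by move=> w; rewrite map_cat flatten_cat coef_cat b1 b2.
Qed.

Lemma ideal_scale c f : in_ideal al be ga f -> in_ideal al be ga (fun w => c * f w).
Proof.
move=> [L [a b]]; exists [seq (c * x.1.1.1, x.1.1.2, x.1.2, x.2) | x <- L]; split.
  by move=> x /mapP [y hy ->] /=; apply: a.
move=> w; rewrite b; elim: L {a b} => [|x L IH] /=.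
  by rewrite /coef !big_nil mulr0.
rewrite !coef_cat mulrDr IH; congr (_ + _).
rewrite !coefE !big_map mulr_sumr; apply: eq_bigr => y _ /=.
by rewrite !mulrA.
Qed.

Lemma ideal_gen p q r : valid_path n p -> valid_path n q -> (r.2 < n)%N ->
  in_ideal al be ga (coef (sandwich n p (relation al be ga r) q)).
Proof.
move=> vp vq hr; exists [:: (1, p, r, q)]; split.
  by move=> x; rewrite mem_seq1 => /eqP -> /=.
move=> w /=; rewrite cats0; congr coef.
elim: (sandwich _ _ _ _) => [|[y1 y2] S IH] //=; by rewrite mul1r -IH.
Qed.

Lemma all_scl (P : seq bool -> bool) c l :
  all (fun x : F * seq bool => P x.2) (scl c l) = all (fun x => P x.2) l.
Proof. by rewrite /scl all_map. Qed.

Lemma N_normal m s w : (meas w < m)%N -> all (fun x : F * seq bool => find x.2 == None) (N s w).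
Proof.
elim: m w => [|m IH] w hm //.
case E: (find w) => [[[A k] B]|]; last by rewrite N_none //= E.
have ew := find_some E.
have h1 := meas_r1 A k B; have h2 := meas_r2 A k B; have h3 := meas_r3 A k B.
rewrite -ew in h1 h2 h3.
rewrite (N_some _ E) /linmap /step /= !all_cat !(all_scl (fun w => find w == None)) !IH //; rewrite /r3 /= in h3; lia.
Qed.

Lemma span_N m s w : (s < n)%N -> (meas w < m)%N ->
  in_ideal al be ga (fun q => (q == tp n s w)%:R - coef (toQ s (N s w)) q).
Proof.
move=> hs; elim: m w => [|m IH] w hm //.
case E: (find w) => [[[A k] B]|]; last first.
  apply: (ideal_ext _ ideal0) => q.
  by rewrite N_none // coefE big_cons big_nil /= mul1r addr0 eq_sym subrr.
have ew := find_some E.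
have m1 := meas_r1 A k B; have m2 := meas_r2 A k B; have m3 := meas_r3 A k B.
rewrite -ew in m1 m2 m3.
have i1 := IH (A ++ r1 k ++ B) (leq_trans m1 hm).
have i2 := IH (A ++ r2 k ++ B) (leq_trans m2 hm).
have i3 := IH (A ++ r3 k ++ B) (leq_trans m3 hm).
have hv := vert_lt hn A hs.
have hp : (par k (vert n s A) < n)%N by rewrite /par; case: (k); rewrite ?vprev_lt.
have gen := @ideal_gen (tp n s A) (tp n (vert n s (A ++ lhs k)) B) (k, par k (vert n s A))
  (valid_tp hn A hs) (valid_tp hn B (vert_lt hn _ hs))
  hp.
have := ideal_add gen (ideal_add (ideal_scale (ca k (vert n s A)) i1)
  (ideal_add (ideal_scale (cb k (vert n s A)) i2) (ideal_scale (cc k (vert n s A)) i3))).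
apply: ideal_ext => q /=.
rewrite sandwich_tp // !coefE !big_cons big_nil /=.
rewrite -!coefE !coef_toQ (sumw_N_some _ _ E) ew !(eq_sym q).
ring.
Qed.

Lemma toL s (l : lcw) : (s < n)%N -> all (fun x : F * seq bool => find x.2 == None) l ->
  exists L : seq (F * (nat * nat * nat * nat)),
    (forall x, x \in L -> (x.2.1.1.1 < n)%N) /\ bcomb n L = toQ s l.
Proof.
move=> hs; elim: l => [|x l IH] /=; first by exists [::].
case/andP => /eqP hx /IH [L [h1 h2]].
have [k [j [l' ex]]] := normal_enc hx.
exists ((x.1, (s, j, k, l')) :: L); split.
  by move=> y; rewrite in_cons => /orP [/eqP -> //|]; apply: h1.
by rewrite /= h2 bpath_tp // -ex.
Qed.

Lemma spanning (p : qpath) : valid_path n p ->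
  exists L : seq (F * (nat * nat * nat * nat)),
    (forall x, x \in L -> (x.2.1.1.1 < n)%N) /\
    in_ideal al be ga (fun w => (w == p)%:R - coef (bcomb n L) w).
Proof.
move=> vp; have hs : (p.1 < n)%N by case/andP: vp.
have ep := tp_valid hn vp.
have hN := @N_normal (meas (map fst p.2)).+1 p.1 (map fst p.2) (ltnSn _).
have [L [h1 h2]] := toL hs hN.
exists L; split => //.
apply: (ideal_ext _ (span_N hs (ltnSn (meas (map fst p.2))))) => q.
by rewrite h2 -ep.
Qed.

Definition nu s0 u0 (q : qpath) : F :=
  if valid_path n q && (q.1 == s0) then sumw (N s0 (map fst q.2)) (fun x => (x == u0)%:R)
  else 0.

Definition Phi s0 u0 (l : lc F) := \sum_(x <- l) x.1 * nu s0 u0 x.2.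

Lemma PhiE s0 u0 (l : lc F) (S : seq qpath) : uniq S -> (forall x, x \in l -> x.2 \in S) ->
  Phi s0 u0 l = \sum_(q <- S) coef l q * nu s0 u0 q.
Proof.
move=> hS; elim: l => [|x l IH] hl.
  by rewrite /Phi big_nil; symmetry; apply: big1 => q _; rewrite /coef big_nil mul0r.
rewrite /Phi big_cons -/(Phi s0 u0 l) IH; last first.
  by move=> y hy; apply: hl; rewrite in_cons hy orbT.
rewrite [in RHS](eq_bigr (fun q => (if x.2 == q then x.1 else 0) * nu s0 u0 q + coef l q * nu s0 u0 q));
  last by move=> q _; rewrite coef_cons mulrDl.
rewrite big_split /=; congr (_ + _).
have hx : x.2 \in S by apply: hl; rewrite in_cons eqxx.
rewrite (bigD1_seq x.2) //= eqxx big1 ?addr0 //.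
by move=> q hq; rewrite eq_sym (negbTE hq) mul0r.
Qed.

Lemma Phi_coef s0 u0 (l1 l2 : lc F) : coef l1 =1 coef l2 -> Phi s0 u0 l1 = Phi s0 u0 l2.
Proof.
move=> e; set S := undup (map snd (l1 ++ l2)).
have hS : uniq S by apply: undup_uniq.
rewrite (@PhiE _ _ _ S) // ?(@PhiE _ _ _ S) //.
- by apply: eq_bigr => q _; rewrite e.
- by move=> x hx; rewrite mem_undup map_f // mem_cat hx orbT.
- by move=> x hx; rewrite mem_undup map_f // mem_cat hx.
Qed.

Lemma Phi_cat s0 u0 (l1 l2 : lc F) : Phi s0 u0 (l1 ++ l2) = Phi s0 u0 l1 + Phi s0 u0 l2.
Proof. by rewrite /Phi big_cat. Qed.

Lemma Phi_mapc s0 u0 c (l : lc F) :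
  Phi s0 u0 [seq (c * y.1, y.2) | y <- l] = c * Phi s0 u0 l.
Proof.
rewrite /Phi big_map mulr_sumr; apply: eq_bigr => y _ /=; by rewrite mulrA.
Qed.

Lemma nu_tp s0 u0 s W : (s < n)%N ->
  nu s0 u0 (tp n s W) = if s == s0 then sumw (N s0 W) (fun x => (x == u0)%:R) else 0.
Proof. by move=> hs; rewrite /nu valid_tp //= map_fst_arr; case: eqP => // ->. Qed.

Lemma Phi_sandwich s0 u0 p q b i : valid_path n p -> valid_path n q -> (i < n)%N ->
  Phi s0 u0 (sandwich n p (relation al be ga (b, i)) q) = 0.
Proof.
move=> vp vq hi.
case: (sandwich_cases b vp vq hi) => [->|[s [A [B [hs -> -> ->]]]]].
  by rewrite /Phi big_nil.
rewrite sandwich_tp // /Phi !big_cons big_nil /= !nu_tp //.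
case: eqP => [es|_]; last by ring.
subst s0.
rewrite (@N_rel (meas (A ++ lhs b ++ B)).+1) //.
ring.
Qed.

Lemma nu_normal s0 u0 s e : (s < n)%N -> find e = None ->
  nu s0 u0 (tp n s e) = (tp n s e == tp n s0 u0)%:R.
Proof.
move=> hs he; rewrite nu_tp //.
case: eqP => [<-|ne].
  rewrite sumw_N_none //.
  case: (eqVneq e u0) => [->|ne']; first by rewrite !eqxx.
  case: eqP => // /tp_inj [_ h]; by rewrite h eqxx in ne'.
by case: eqP => // /tp_inj [h _].
Qed.

Lemma independence (L : seq (F * (nat * nat * nat * nat))) :
  (forall x, x \in L -> (x.2.1.1.1 < n)%N) ->
  in_ideal al be ga (coef (bcomb n L)) ->
  forall w, coef (bcomb n L) w = 0.
Proof.
move=> hL [M [hM eM]] w0.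
have hb : forall x, x \in bcomb n L ->
    exists i j k l, (i < n)%N /\ x.2 = tp n i (enc k j l).
  move=> x /mapP [y hy ->] /=.
  exists y.2.1.1.1, y.2.1.1.2, y.2.1.2, y.2.2; split; first exact: hL.
  by rewrite bpath_tp // hL.
case C: (valid_path n w0 && (find (map fst w0.2) == None)); last first.
  rewrite /coef big1_seq // => x /andP [/eqP ex hx].
  have [i [j [k [l [hi e]]]]] := hb x hx.
  by move: C; rewrite -ex e valid_tp //= map_fst_arr find_enc eqxx.
case/andP: C => vw /eqP hw.
set s0 := w0.1; set u0 := map fst w0.2.
have ew : w0 = tp n s0 u0 := tp_valid hn vw.
have -> : coef (bcomb n L) w0 = Phi s0 u0 (bcomb n L).
  rewrite coefE /Phi [RHS]big_seq [LHS]big_seq; apply: eq_bigr => x hx.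
  have [i [j [k [l [hi e]]]]] := hb x hx.
  by rewrite e nu_normal ?find_enc // -ew.
rewrite (Phi_coef _ _ eM).
elim: M hM {eM} => [|x M IH] hM; first by rewrite /Phi big_nil.
rewrite /= Phi_cat IH; last first.
  by move=> y hy; apply: hM; rewrite in_cons hy orbT.
have [v1 v2 v3] := hM x (mem_head _ _).
have := @Phi_sandwich s0 u0 x.1.1.2 x.2 x.1.2.1 x.1.2.2 v1 v2 v3.
case: x {hM v1 v2 v3} => [[[c p] [b i]] q] /= h.
by rewrite Phi_mapc h mulr0 addr0.
Qed.

End Alg.

Unset Implicit Arguments.
Set Strict Implicit.
Local Open Scope ring_scope.

Theorem proposition1p1 (F : closedFieldType) (hchar : [pchar F] =i pred0)
  (n : nat) (hn : (0 < n)%N) (al be ga : n.-tuple F) :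
  (* spanning: every path of Q is congruent modulo the ideal of relations to a
     linear combination of the paths bpath i j k l (i < n) *)
  (forall p : qpath, valid_path n p ->
     exists L : seq (F * (nat * nat * nat * nat)),
       (forall x, x \in L -> (x.2.1.1.1 < n)%N) /\
       in_ideal al be ga (fun w => (w == p)%:R - coef (bcomb n L) w)) /\
  (* linear independence modulo the ideal *)
  (forall L : seq (F * (nat * nat * nat * nat)),
     (forall x, x \in L -> (x.2.1.1.1 < n)%N) ->
     in_ideal al be ga (coef (bcomb n L)) ->
     forall w, coef (bcomb n L) w = 0).
Proof.
split.
- move=> p vp; exact: (@spanning F n hn al be ga p vp).
- move=> L hL hI; exact: (@independence F n hn al be ga L hL hI).
Qed.
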